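(* Assume the hypotheses of the one-step error recursion hold, and let $\Upsilon_C>0$, $\rho\in(0,1)$ be constants such that for every $i\in[1,T]$ with $(\tilde z_i^0,\tilde\lambda_i^0)\in\mathcal N_\epsilon(\tilde z_i^\star,\tilde\lambda_i^\star)$ the recursion $$\Psi^1_{k,i}\le\Upsilon_C\Big(\sum_{j=n_1(i)}^{n_2(i)}\rho^{|k-j|}(\Psi^0_{j,i})^2+\rho^{k-n_1(i)}\|x^0_{n_1(i),i}-x^\star_{n_1(i)}\|+\rho^{n_2(i)-k}\epsilon\Big),\quad k\in[n_1(i),n_2(i)],$$ holds. Suppose $L$ and $\epsilon$ satisfy $$\rho^L\le\epsilon\le\frac{1-\rho}{16\Upsilon_C(1+\rho)}.$$ Then for every $i\in[1,T-1]$: if $(\tilde z_i^0,\tilde\lambda_i^0)\in\mathcal N_\epsilon(\tilde z_i^\star,\tilde\lambda_i^\star)$, then $(\tilde z_{i+1}^0,\tilde\lambda_{i+1}^0)\in\mathcal N_\epsilon(\tilde z_{i+1}^\star,\tilde\lambda_{i+1}^\star)$.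
   Context: Notation: $[k]=\{0,1,\dots,k\}$; for integers $k_1<k_2$, $[k_1,k_2]$, $[k_1,k_2)$, $(k_1,k_2]$ denote the corresponding sets of integers; $a\vee b=\max(a,b)$, $a\wedge b=\min(a,b)$. Full-horizon problem $\mathcal P_{0:N}(d)$: minimize $\sum_{k=0}^{N-1}g_k(x_k,u_k;d_k)+g_N(x_N)$ over $x_k\in\mathbb R^{n_x}$, $u_k\in\mathbb R^{n_u}$ subject to $x_{k+1}=f_k(x_k,u_k;d_k)$, $k\in[N-1]$, $x_0=\bar x_0$; $g_k,f_k,g_N$ twice continuously differentiable. Write $z_k=(x_k;u_k)$ ($k<N$), $z_N=x_N$, multipliers $\lambda=(\lambda_{-1};\dots;\lambda_{N-1})$, stage Lagrangians $\mathcal L_k=g_k(z_k;d_k)+\lambda_{k-1}^Tx_k-\lambda_k^Tf_k(z_k;d_k)$. $(z^\star,\lambda^\star)$ is a fixed KKT solution of $\mathcal P_{0:N}(d)$. ''The hypotheses of the one-step error recursion'' are: (a) Uniform SOSC in the $M$-neighborhood: reduced Hessian of the full problem $\succeq\gamma_H I$ at every point agreeing with $(z^\star,\lambda^\star)$ outside a window of $M+1$ consecutive stages and within $\epsilon$ (componentwise in $x_k,u_k,\lambda_k$) inside it; (b) controllability: for each $k\in[N-t]$ some $t_k\in[1,t]$ with $\Xi_{k,t_k}\Xi_{k,t_k}^T\succeq\gamma_C I$ at all points within $\epsilon$ of $z^\star$, where $\Xi_{k,s}=(B_{k+s-1},A_{k+s-1}B_{k+s-2},\dots,A_{k+s-1}\cdots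 A_{k+1}B_k)$, $A_k,B_k$ the Jacobians of $f_k$; (c) $\|A_k\|,\|B_k\|,\|H_k\|,\|\nabla^2 g_N\|\le\Upsilon$ (with $\Upsilon\ge2+\sqrt2$) within $\epsilon$ of the solution, $H_k$ the Hessian of $\mathcal L_k$ in $(x_k,u_k)$; (d) $H_k$ and $\nabla f_k$ are $\Upsilon_L$-Lipschitz within $\epsilon$ of the solution; (e) $\mu\ge16\Upsilon(\Upsilon^{6t}-\Upsilon^{4t})/\gamma_C^2$. All constants are independent of $N$. Receding horizons: integers $L\ge1$, $M=SL$ with $S>2$ an integer, $N\ge M$; $T=\lceil(N-M)/L\rceil+1$; $n_1(i)=(i-1)L$, $n_2(i)=(n_1(i)+M)\wedge N$ for $i\in[1,T]$. A fixed guess $(z^0,\lambda^0)$ with $\|x_k^0-x_k^\star\|\vee\|u_k^0-u_k^\star\|\vee\|\lambda_k^0-\lambda_k^\star\|\le\epsilon$ for all $k$ and $x_0^0=\bar x_0$ is given. Subproblem $i$: minimize over $x_{n_1(i):n_2(i)},u_{n_1(i):n_2(i)-1}$ the cost $\sum_{k=n_1(i)}^{n_2(i)-1}g_k(z_k;d_k)+\Phi_i(x_{n_2(i)})$ subject to $x_{k+1}=f_k(z_k;d_k)$, $k\in[n_1(i),n_2(i)-1]$, $x_{n_1(i)}=\bar x_{n_1(i)}$, where for $i<T$, $\Phi_i(x)=g_{n_2(i)}(x,u^0_{n_2(i)};d_{n_2(i)})-(\lambda^0_{n_2(i)})^Tf_{n_2(i)}(x,u^0_{n_2(i)};d_{n_2(i)})+\frac\mu2\|x-x^0_{n_2(i)}\|^2$,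 and $\Phi_T=g_N$. Its Lagrangian is $\mathcal L^i=\sum_{k=n_1(i)}^{n_2(i)-1}\mathcal L_k+\Phi_i(x_{n_2(i)})+\lambda_{n_2(i)-1}^Tx_{n_2(i)}-\lambda_{n_1(i)-1}^T\bar x_{n_1(i)}$ in $\tilde z_i=(z_{n_1(i)};\dots;z_{n_2(i)-1};x_{n_2(i)})$, $\tilde\lambda_i=\lambda_{n_1(i)-1:n_2(i)-1}$, with KKT matrix $K^i$. Truncated solution $\tilde z_i^\star=(z^\star_{n_1(i):n_2(i)-1};x^\star_{n_2(i)})$, $\tilde\lambda_i^\star=\lambda^\star_{n_1(i)-1:n_2(i)-1}$; $(\tilde z_i,\tilde\lambda_i)\in\mathcal N_\epsilon(\tilde z_i^\star,\tilde\lambda_i^\star)$ means $\|x_k-x_k^\star\|\vee\|u_k-u_k^\star\|\vee\|\lambda_k-\lambda_k^\star\|\le\epsilon$ for $k\in[n_1(i),n_2(i)-1]$ and $\|x_{n_2(i)}-x^\star_{n_2(i)}\|\le\epsilon$. Algorithm 1 (one Newton step per horizon): iterates $(z^0_{k,i},\lambda^0_{k,i})$ (input to subproblem $i$) and $(z^1_{k,i},\lambda^1_{k,i})$ (output), with $z_{n_2(i),i}=x_{n_2(i),i}$. For $i=1$: $z^0_{k,1}=z^0_k$ for $k\in[0,M-1]$, $x^0_{M,1}=x^0_M$, $\lambda^0_{k,1}=\lambda^0_k$ for $k\in[-1,M-1]$. For $i\ge2$: $\bar x_{n_1(i)}=x^1_{n_1(i),i-1}$; $(z^0_{k,i},\lambda^0_{k,i})=(z^1_{k,i-1},\lambda^1_{k,i-1})$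 for $k\in[n_1(i),n_2(i)-2L]$; $(z^0_{k,i},\lambda^0_{k,i})=(z^0_k,\lambda^0_k)$ for $k\in(n_2(i)-2L,n_2(i)-1]$; $x^0_{n_2(i),i}=x^0_{n_2(i)}$; $\lambda^0_{n_1(i)-1,i}=\lambda^1_{n_1(i)-1,i-1}$. Then $(\tilde z_i^1,\tilde\lambda_i^1)=(\tilde z_i^0,\tilde\lambda_i^0)+\Delta$ with $K^i(\tilde z_i^0,\tilde\lambda_i^0;\tilde d_i)\Delta=-\nabla\mathcal L^i(\tilde z_i^0,\tilde\lambda_i^0;\tilde d_i)$. Note $x^0_{n_1(i),i}=\bar x_{n_1(i)}$. Errors: $\Psi^{\mathrm{Id}}_{k,i}=\|(z^{\mathrm{Id}}_{k,i}-z^\star_k;\lambda^{\mathrm{Id}}_{k,i}-\lambda^\star_k)\|$ for $k\in[n_1(i),n_2(i)-1]$ and $\Psi^{\mathrm{Id}}_{n_2(i),i}=\|x^{\mathrm{Id}}_{n_2(i),i}-x^\star_{n_2(i)}\|$, $\mathrm{Id}\in\{0,1\}$. *)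

(* Defs.v *)
(* abstract real closed field R (Euclidean norm needs sqrt). *)
From HB Require Import structures.
From mathcomp Require Import all_boot all_order all_algebra.
Set Implicit Arguments. Unset Strict Implicit. Unset Printing Implicit Defensive.
Import Order.TTheory GRing.Theory Num.Theory.
Local Open Scope ring_scope.

Definition vnorm (R : rcfType) (n : nat) (v : 'cV[R]_n) : R :=
  Num.sqrt (\sum_(i < n) (v i 0) ^+ 2).

Definition nat_dist (k j : nat) : nat := ((k - j) + (j - k))%N.

(* Receding-horizon indices: M = S*L, T = ceil((N-M)/L) + 1,
   n1(i) = (i-1)L, n2(i) = min(n1(i)+M, N). *)
Definition horM (S L : nat) : nat := (S * L)%N.
Definition horT (N S L : nat) : nat := (((N - horM S L) + L.-1) %/ L + 1)%N.
Definition n1 (L i : nat) : nat := ((i - 1) * L)%N.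
Definition n2 (N S L i : nat) : nat := minn (n1 L i + horM S L) N.

(* Error Psi_{k,i} of an iterate (x,u,lam) (indexed by stage k and horizon i)
   w.r.t. the KKT solution (xs,us,ls); e = n2(i) is the horizon end. *)
Definition Psi (R : rcfType) (nx nu : nat)
  (xs : nat -> 'cV[R]_nx) (us : nat -> 'cV[R]_nu) (ls : nat -> 'cV[R]_nx)
  (x : nat -> nat -> 'cV[R]_nx) (u : nat -> nat -> 'cV[R]_nu)
  (l : nat -> nat -> 'cV[R]_nx) (e k i : nat) : R :=
  if (k < e)%N then
    vnorm (col_mx (col_mx (x k i - xs k) (u k i - us k)) (l k i - ls k))
  else vnorm (x k i - xs k).

(* (tilde z_i, tilde lambda_i) in N_eps(tilde z_i star, tilde lambda_i star),
   horizon [b, e] = [n1(i), n2(i)]. *)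
Definition inNbhd (R : rcfType) (nx nu : nat)
  (xs : nat -> 'cV[R]_nx) (us : nat -> 'cV[R]_nu) (ls : nat -> 'cV[R]_nx)
  (x : nat -> nat -> 'cV[R]_nx) (u : nat -> nat -> 'cV[R]_nu)
  (l : nat -> nat -> 'cV[R]_nx) (eps : R) (b e i : nat) : Prop :=
  (forall k, (b <= k)%N -> (k < e)%N ->
     [/\ vnorm (x k i - xs k) <= eps, vnorm (u k i - us k) <= eps
       & vnorm (l k i - ls k) <= eps])
  /\ vnorm (x e i - xs e) <= eps.

(* Main.v *)
Require Import Defs.
From HB Require Import structures.
From mathcomp Require Import all_boot all_order all_algebra.
From mathcomp Require Import zify ring lra.
Import Order.TTheory GRing.Theory Num.Theory.
Local Open Scope ring_scope.
Set Implicit Arguments. Unset Strict Implicit.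

Lemma vnorm_ge0 (R : rcfType) n (v : 'cV[R]_n) : 0 <= vnorm v.
Proof. exact: sqrtr_ge0. Qed.

Lemma vnorm_sq (R : rcfType) n (v : 'cV[R]_n) :
  vnorm v ^+ 2 = \sum_(i < n) (v i 0) ^+ 2.
Proof. rewrite /vnorm sqr_sqrtr //; apply: sumr_ge0 => i _; exact: sqr_ge0. Qed.

Lemma vnorm_col (R : rcfType) m n (a : 'cV[R]_m) (b : 'cV[R]_n) :
  vnorm (col_mx a b) ^+ 2 = vnorm a ^+ 2 + vnorm b ^+ 2.
Proof.
rewrite !vnorm_sq big_split_ord /=.
by congr (_ + _); apply: eq_bigr => i _; rewrite ?col_mxEu ?col_mxEd.
Qed.

Lemma le_sq (R : rcfType) (a b : R) : 0 <= a -> 0 <= b -> a ^+ 2 <= b ^+ 2 -> a <= b.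
Proof. move=> ha hb; rewrite ler_pXn2r // ?nnegrE //. Qed.

Lemma vnorm_colu (R : rcfType) m n (a : 'cV[R]_m) (b : 'cV[R]_n) :
  vnorm a <= vnorm (col_mx a b).
Proof.
apply: le_sq; rewrite ?vnorm_ge0 // vnorm_col lerDl; exact: sqr_ge0.
Qed.

Lemma vnorm_cold (R : rcfType) m n (a : 'cV[R]_m) (b : 'cV[R]_n) :
  vnorm b <= vnorm (col_mx a b).
Proof.
apply: le_sq; rewrite ?vnorm_ge0 // vnorm_col lerDr; exact: sqr_ge0.
Qed.

Lemma geom (R : realFieldType) (r : R) n :
  (1 - r) * \sum_(i < n) r ^+ i = 1 - r ^+ n.
Proof.
elim: n => [|n IH]; first by rewrite big_ord0 expr0 mulr0 subrr.
rewrite big_ord_recr /= mulrDr IH exprS; ring.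
Qed.

Lemma geom_le (R : realFieldType) (r : R) n : 0 <= r -> r < 1 ->
  (1 - r) * \sum_(i < n) r ^+ i <= 1.
Proof. move=> h0 h1; rewrite geom lerBlDr lerDl; exact: exprn_ge0. Qed.

Lemma dist_sum (R : realFieldType) (r : R) k a b : 0 <= r -> r < 1 -> (k <= b)%N ->
  (1 - r) * \sum_(a <= j < b.+1) r ^+ (nat_dist k j) <= 2.
Proof.
move=> h0 h1 hk.
have hF : forall j, 0 <= r ^+ (nat_dist k j) by move=> j; exact: exprn_ge0.
have h1r : 0 <= 1 - r by lra.
have -> : (2 : R) = 1 + 1 by [].
have E1 : \sum_(a <= j < b.+1) r ^+ (nat_dist k j) <= \sum_(0 <= j < b.+1) r ^+ (nat_dist k j).
  case: (leqP a b.+1) => hab.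
    rewrite (big_cat_nat (leq0n a) hab) /= lerDr; exact: sumr_ge0.
  rewrite big_geq; last by apply: ltnW. exact: sumr_ge0.
apply: (le_trans (ler_wpM2l h1r E1)).

rewrite (big_cat_nat (leq0n k) (leqW hk)) /= mulrDr.
apply: lerD.
  rewrite big_nat_rev /= add0n.
  apply: le_trans _ (geom_le k h0 h1); apply: ler_wpM2l => //.
  rewrite big_mkord; apply: ler_sum => i _.
  rewrite /nat_dist.
  have -> : ((k - (k - i.+1)) + (k - i.+1 - k))%N = i.+1 by have := ltn_ord i; lia.
  rewrite exprS ler_piMl ?exprn_ge0 //; lra.
rewrite -{1}(add0n k) big_addn.
apply: le_trans _ (geom_le (b.+1 - k) h0 h1); apply: ler_wpM2l => //.
rewrite big_mkord; apply: ler_sum => i _.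
rewrite /nat_dist.
have -> : ((k - (i + k)) + (i + k - k))%N = i by lia.
by [].
Qed.

Lemma sq_le (R : realFieldType) (x E : R) : 0 <= x -> x <= E -> x ^+ 2 <= E ^+ 2.
Proof. by move=> h0 h1; rewrite !expr2 ler_pM. Qed.

Lemma arith (R : realFieldType) (U E r Sd P v p1 p2 : R) :
  0 < U -> 0 < r -> r < 1 -> 0 <= E -> (1 - r) * Sd <= 2 -> 0 <= Sd ->
  P <= 3%:R * E ^+ 2 * Sd -> 0 <= v -> v <= E -> 0 <= p1 -> p1 <= E ->
  0 <= p2 -> p2 <= E -> E <= (1 - r) / (16%:R * U * (1 + r)) ->
  U * (P + p1 * v + p2 * E) <= E.
Proof.
move=> hU hr0 hr1 hE hS hS0 hP hv0 hv hp10 hp1 hp20 hp2 hEb.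
have hd : 0 < 16%:R * U * (1 + r) by apply: mulr_gt0; [apply: mulr_gt0 => //|]; lra.
rewrite ler_pdivlMr // in hEb.
have hUE : U * E <= (1 - r) / 16%:R.
  rewrite ler_pdivlMr; last by [].
  have e1 : E * (16%:R * U * (1 + r)) = 16%:R * (U * E) + 16%:R * (U * E) * r by ring.
  have e2 : 0 <= 16%:R * (U * E) * r by apply: mulr_ge0; [apply: mulr_ge0 => //; apply: mulr_ge0; lra|lra].
  lra.
have hUE1 : U * E <= 1 / 16%:R by apply: le_trans hUE _; rewrite ler_pM2r //; lra.
have hUE0 : 0 <= U * E by apply: mulr_ge0 => //; lra.
have h1 : U * P <= 3%:R * E * ((U * E) * Sd).
  apply: le_trans (ler_wpM2l (ltW hU) hP) _.
  rewrite [X in X <= _](_ : _ = 3%:R * E * ((U * E) * Sd)) //; rewrite !expr2; ring.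
have h2 : (U * E) * Sd <= (1 - r) / 16%:R * Sd by apply: ler_wpM2r.
have h3 : (1 - r) / 16%:R * Sd <= 2 / 16%:R.
  rewrite mulrAC ler_pM2r ?invr_gt0 ?ltr0n //.
have h4 : U * (p1 * v) <= U * E * E.
  rewrite -mulrA; apply: ler_wpM2l; [lra| exact: ler_pM].
have h5 : U * (p2 * E) <= U * E * E.
  rewrite -mulrA; apply: ler_wpM2l; [lra| exact: ler_wpM2r].
rewrite !mulrDr.
have h6 : 3%:R * E * ((U * E) * Sd) <= 3%:R * E * (2 / 16%:R).
  apply: ler_wpM2l; first lra. exact: le_trans h2 h3.
have h7 : U * E * E <= 1 / 16%:R * E by rewrite ler_wpM2r.
lra.
Qed.

Unset Implicit Arguments. Set Strict Implicit.
Theorem theorem3 (R : rcfType) (nx nu N L S : nat)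
  (* KKT solution (z star, lambda star) and initial point xbar0 *)
  (xbar0 : 'cV[R]_nx)
  (xs : nat -> 'cV[R]_nx) (us : nat -> 'cV[R]_nu) (ls : nat -> 'cV[R]_nx)
  (* fixed guess (z^0, lambda^0) *)
  (xg : nat -> 'cV[R]_nx) (ug : nat -> 'cV[R]_nu) (lg : nat -> 'cV[R]_nx)
  (* iterates of Algorithm 1: input (x0,u0,l0) k i and output (x1,u1,l1) k i *)
  (x0 x1 : nat -> nat -> 'cV[R]_nx) (u0 u1 : nat -> nat -> 'cV[R]_nu)
  (l0 l1 : nat -> nat -> 'cV[R]_nx)
  (eps rho UC : R) :
  (0 < L)%N -> (2 < S)%N -> (horM S L <= N)%N ->
  xs 0%N = xbar0 ->
  (* guess within eps of the solution, with x_0^0 = xbar0 *)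
  (forall k, (k <= N)%N -> vnorm (xg k - xs k) <= eps) ->
  (forall k, (k < N)%N -> vnorm (ug k - us k) <= eps) ->
  (forall k, (k < N)%N -> vnorm (lg k - ls k) <= eps) ->
  xg 0%N = xbar0 ->
  (* initialization of subproblem 1 *)
  (forall k, (k <= horM S L)%N -> x0 k 1%N = xg k) ->
  (forall k, (k < horM S L)%N -> u0 k 1%N = ug k /\ l0 k 1%N = lg k) ->
  (* warm start of subproblem i >= 2 *)
  (forall i, (2 <= i <= horT N S L)%N ->
     x0 (n1 L i) i = x1 (n1 L i) (i - 1)%N) ->
  (forall i k, (2 <= i <= horT N S L)%N ->
     (n1 L i <= k <= n2 N S L i - 2 * L)%N ->
     [/\ x0 k i = x1 k (i - 1)%N, u0 k i = u1 k (i - 1)%N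
       & l0 k i = l1 k (i - 1)%N]) ->
  (forall i k, (2 <= i <= horT N S L)%N ->
     (n2 N S L i - 2 * L < k <= (n2 N S L i).-1)%N ->
     [/\ x0 k i = xg k, u0 k i = ug k & l0 k i = lg k]) ->
  (forall i, (2 <= i <= horT N S L)%N -> x0 (n2 N S L i) i = xg (n2 N S L i)) ->
  (* constants of the one-step error recursion *)
  0 < UC -> 0 < rho -> rho < 1 ->
  (* the one-step error recursion *)
  (forall i, (1 <= i <= horT N S L)%N ->
     inNbhd xs us ls x0 u0 l0 eps (n1 L i) (n2 N S L i) i ->
     forall k, (n1 L i <= k <= n2 N S L i)%N ->
       Psi xs us ls x1 u1 l1 (n2 N S L i) k i
       <= UC * (\sum_(n1 L i <= j < (n2 N S L i).+1)
                  rho ^+ (nat_dist k j) * (Psi xs us ls x0 u0 l0 (n2 N S L i) j i) ^+ 2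
                + rho ^+ (k - n1 L i) * vnorm (x0 (n1 L i) i - xs (n1 L i))
                + rho ^+ (n2 N S L i - k) * eps)) ->
  rho ^+ L <= eps ->
  eps <= (1 - rho) / (16%:R * UC * (1 + rho)) ->
  forall i, (1 <= i <= (horT N S L).-1)%N ->
    inNbhd xs us ls x0 u0 l0 eps (n1 L i) (n2 N S L i) i ->
    inNbhd xs us ls x0 u0 l0 eps (n1 L i.+1) (n2 N S L i.+1) i.+1.
Proof.
move=> hL hS hMN _ Hxg Hug Hlg _ _ _ Hw1 Hw2 Hw3 Hw4 hU hr0 hr1 Hrec hrL hEb.
move=> i /andP[hi1 hiT] [Hin Hine].
set T := horT N S L in hiT Hw1 Hw2 Hw3 Hw4 Hrec.
have hE0 : 0 <= eps by apply: le_trans hrL; apply: exprn_ge0; exact: ltW.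
have hiT' : (2 <= i.+1 <= T)%N by apply/andP; split; [|]; lia.
have hiT1 : (1 <= i <= T)%N by apply/andP; split; lia.
have hsub : (i.+1 - 1)%N = i by rewrite subn1.
have hM3 : (3 * L <= horM S L)%N by rewrite /horM leq_mul2r; lia.
have hn1 : n1 L i.+1 = (n1 L i + L)%N.
  by rewrite /n1 subn1 /=; case: i hi1 {Hin Hine hiT hiT' hiT1 hsub} => // i' _; rewrite subn1 /= mulSn addnC.
have hn2 : n2 N S L i.+1 = minn (n1 L i + L + horM S L) N by rewrite /n2 hn1.
have hn2i : n2 N S L i = minn (n1 L i + horM S L) N by [].
have hN0 : (0 < N)%N by lia.
split.
- move=> k hk1 hk2.
  case: (leqP k (n2 N S L i.+1 - 2 * L)) => hk.
  + have [ex eu el] := Hw2 i.+1 k hiT' (introT andP (conj hk1 hk)).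
    rewrite ex eu el hsub.
    have hkr : (n1 L i <= k <= n2 N S L i)%N by apply/andP; split; lia.
    have hrec := Hrec i hiT1 (conj Hin Hine) k hkr.
    have hkn : (k < n2 N S L i)%N by lia.
    rewrite /Psi hkn in hrec.
    set V := col_mx (col_mx _ _) _ in hrec.
    have hV : vnorm V <= eps.
      apply: le_trans hrec _.
      apply: (@arith R UC eps rho (\sum_(n1 L i <= j < (n2 N S L i).+1) rho ^+ nat_dist k j)) => //.
      * apply: dist_sum => //; [exact: ltW | lia].
      * apply: sumr_ge0 => j _; apply: exprn_ge0; exact: ltW.
      * rewrite mulr_sumr; apply: ler_sum_nat => j hj.
        rewrite mulrC; apply: ler_wpM2r; first by apply: exprn_ge0; exact: ltW.
        rewrite /Psi; case: ifP => hj2.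
        -- rewrite !vnorm_col.
           have [h1 h2 h3] := Hin j (proj1 (andP hj)) hj2.
           have q1 := sq_le (vnorm_ge0 _) h1.
           have q2 := sq_le (vnorm_ge0 _) h2.
           have q3 := sq_le (vnorm_ge0 _) h3.
           lra.
        -- have hj3 : j = n2 N S L i by move: hj hj2 => /andP [_ ?] /negbT; rewrite -leqNgt; lia.
           rewrite hj3; have q := sq_le (vnorm_ge0 _) Hine.
           have : 0 <= eps ^+ 2 by apply: sqr_ge0.
           lra.
      * exact: vnorm_ge0.
      * have [] := Hin (n1 L i) (leqnn _) _; [lia|done].
      * apply: exprn_ge0; exact: ltW.
      * apply: le_trans hrL; apply: ler_wiXn2l; [exact: ltW|exact: ltW|lia].
      * apply: exprn_ge0; exact: ltW.
      * apply: le_trans hrL; apply: ler_wiXn2l; [exact: ltW|exact: ltW|lia].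
    split.
    * apply: le_trans hV; apply: le_trans (vnorm_colu _ _) _; exact: vnorm_colu.
    * apply: le_trans hV; apply: le_trans (vnorm_cold _ _) _; exact: vnorm_colu.
    * apply: le_trans hV; exact: vnorm_cold.
  + have hk' : (n2 N S L i.+1 - 2 * L < k <= (n2 N S L i.+1).-1)%N by apply/andP; split; lia.
    have [ex eu el] := Hw3 i.+1 k hiT' hk'.
    rewrite ex eu el; split; [apply: Hxg|apply: Hug|apply: Hlg]; lia.
- rewrite Hw4 //; apply: Hxg; lia.
Qed.
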